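(* Let $\mathbf p$ be a probability vector with strictly positive entries and fix $\varepsilon>0$ such that $1-\varepsilon>\max_{n,i}\lambda_i^{(n)}$. There exists a constant $C_1=C_1(F,\mathbf p,\varepsilon)<\infty$ such that for all $\mathbf i\in\Sigma$ and $0<R\le1$, \[ \frac{\mu_{\mathbf p}(B_{\mathbf i}(R))}{\mu_{\mathbf p}(B_{\mathbf i}((1-\varepsilon)R))}\le C_1. \]
   Context: Setting: $\mathcal I=\{1,\dots,N\}$, $f_i(x)=A_ix+t_i$ on $\mathbb R^d$ with $A_i=\mathrm{diag}(\lambda_i^{(1)},\dots,\lambda_i^{(d)})$, all $\lambda_i^{(n)}\in(0,1)$, $f_i([0,1]^d)\subset[0,1]^d$, no two maps agree on $[0,1]^d$, and for all $m\ne n$ some $i$ has $\lambda_i^{(n)}\ne\lambda_i^{(m)}$; $F$ is the attractor. $\Sigma=\mathcal I^{\mathbb N}$, $\mu_{\mathbf p}=\mathbf p^{\mathbb N}$. For $\mathbf i\in\Sigma$, $r>0$, $L_{\mathbf i}(r,n)$ is the unique integer with $\prod_{\ell=1}^{L_{\mathbf i}(r,n)}\lambda_{i_\ell}^{(n)}\le r<\prod_{\ell=1}^{L_{\mathbf i}(r,n)-1}\lambda_{i_\ell}^{(n)}$. $\mathbf i$ determines a $\sigma$-ordered cube at scale $r$ if $L_{\mathbf i}(r,\sigma_d)\le\dots\le L_{\mathbf i}(r,\sigma_1)$, ties resolved by: if coordinates $k<m$ have $L_{\mathbf i}(r,k)=L_{\mathbf i}(r,m)$ then $k$ precedes $m$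 iff $\prod_{\ell=1}^{L_{\mathbf i}(r,k)}\lambda_{i_\ell}^{(k)}\ge\prod_{\ell=1}^{L_{\mathbf i}(r,k)}\lambda_{i_\ell}^{(m)}$; write $\sigma_{\mathbf i}(r)$ for this ordering. $E_n^\sigma$: span of coordinate axes $\sigma_1,\dots,\sigma_n$; $f_i,f_j$ overlap exactly on $E_n^\sigma$ if their orthogonal projections onto $E_n^\sigma$ agree on $[0,1]^d$. For $1\le n\le d-1$, $\mathcal I_n^\sigma$ is the set of $j$ such that no $i<j$ overlaps exactly with $j$ on $E_n^\sigma$; $\mathcal I_d^\sigma=\mathcal I$; $\Pi_n^\sigma j$ is the unique element of $\mathcal I_n^\sigma$ overlapping exactly with $j$ on $E_n^\sigma$, extended to $\Sigma$ coordinatewise. The symbolic approximate cube is $B_{\mathbf i}(r)=\{\mathbf j\in\Sigma:|\Pi_n^\sigma\mathbf j\wedge\Pi_n^\sigma\mathbf i|\ge L_{\mathbf i}(r,\sigma_n)\ \forall\,1\le n\le d\}$ with $\sigma=\sigma_{\mathbf i}(r)$ and $\wedge$ the longest common prefix. *)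

(* Defs.v *)
From HB Require Import structures.
From mathcomp Require Import all_boot all_order all_algebra all_fingroup.
From mathcomp Require Import all_classical all_reals all_analysis.
Set Implicit Arguments. Unset Strict Implicit. Unset Printing Implicit Defensive.
Import Order.TTheory GRing.Theory Num.Theory.
Local Open Scope ring_scope.

(* Symbolic space Sigma = I^N with I = {0,...,N} (i.e. N.+1 maps, 0-indexed);
   position l of a word corresponds to the paper's i_{l+1}. *)
Definition Sigma (N : nat) := (nat -> 'I_N.+1)%type.

HB.instance Definition _ (N : nat) := gen_eqMixin (Sigma N).
HB.instance Definition _ (N : nat) := gen_choiceMixin (Sigma N).
HB.instance Definition _ (N : nat) :=
  isPointed.Build (Sigma N) (fun _ => ord0).

Definition cyl (N : nat) (u : seq 'I_N.+1) : set (Sigma N) :=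
  [set v | forall l, (l < size u)%N -> v l = nth ord0 u l]%classic.

Definition SigmaM (N : nat) := g_sigma_algebraType (range (@cyl N)).

Section IFS.
Variables (R : realType) (N d : nat) (lam t : 'I_N.+1 -> 'I_d -> R).

Definition fIFS (i : 'I_N.+1) (x : 'I_d -> R) : 'I_d -> R :=
  fun n => lam i n * x n + t i n.

Definition inCube (x : 'I_d -> R) : Prop := forall n, 0 <= x n <= 1.

Definition prodlam (w : Sigma N) (n : 'I_d) (k : nat) : R :=
  \prod_(l < k) lam (w l) n.

(* L_w(r,n): least k with prod_{l<=k} lambda^{(n)} <= r (0 if none) *)
Definition Lsc (w : Sigma N) (r : R) (n : 'I_d) : nat :=
  match pselect (exists k, (fun k => prodlam w n k <= r) k) with
  | left h => ex_minn h
  | right _ => 0%N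
  end.

Definition tie (w : Sigma N) (r : R) (k m : 'I_d) : bool :=
  prodlam w m (Lsc w r k) <= prodlam w k (Lsc w r k).

Definition prec (w : Sigma N) (r : R) (k m : 'I_d) : bool :=
  (Lsc w r m < Lsc w r k)%N ||
  ((Lsc w r k == Lsc w r m) &&
   (if (k < m)%N then tie w r k m else ~~ tie w r m k)).

Definition is_ordering (w : Sigma N) (r : R) (s : {perm 'I_d}) : bool :=
  [forall a : 'I_d, forall b : 'I_d, (a < b)%N ==> prec w r (s a) (s b)].

Definition sigma_ord (w : Sigma N) (r : R) : {perm 'I_d} :=
  odflt 1%g [pick s : {perm 'I_d} | is_ordering w r s].

(* coordinates spanning E_n^s : s_1, ..., s_n  (0-indexed: s m, m < n) *)
Definition Ecoords (s : {perm 'I_d}) (n : nat) : {set 'I_d} :=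
  [set s m | m : 'I_d & (m < n)%N].

Definition overlap (S : {set 'I_d}) (i j : 'I_N.+1) : Prop :=
  forall x, inCube x -> forall k, k \in S -> fIFS i x k = fIFS j x k.

Definition Iset (S : {set 'I_d}) (n : nat) : {set 'I_N.+1} :=
  if (n < d)%N then
    [set j : 'I_N.+1 | ~~ [exists i : 'I_N.+1, (i < j)%N && `[< overlap S i j >]]]
  else [set: 'I_N.+1].

Definition PiI (S : {set 'I_d}) (n : nat) (j : 'I_N.+1) : 'I_N.+1 :=
  odflt j [pick i in Iset S n | `[< overlap S i j >]].

Definition Bsym (w : Sigma N) (r : R) : set (Sigma N) :=
  [set v | forall n : 'I_d,
     let s := sigma_ord w r in
     let S := Ecoords s n.+1 in
     forall l, (l < Lsc w r (s n))%N -> PiI S n.+1 (v l) = PiI S n.+1 (w l)]%classic.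

End IFS.

(* Main.v *)
Set Warnings "-all".
Require Import Defs.
From HB Require Import structures.
From mathcomp Require Import all_boot all_order all_algebra all_fingroup.
From mathcomp Require Import all_classical all_reals all_analysis.
From mathcomp Require Import zify ring lra.
Import Order.TTheory GRing.Theory Num.Theory.
Local Open Scope classical_set_scope.
Local Open Scope ring_scope.
Section Rect.
Variables (R : realType) (N : nat) (p : 'I_N.+1 -> R)
  (mu : {measure set (SigmaM N) -> \bar R}).
Hypothesis Hmu : forall u : seq 'I_N.+1, mu (cyl u) = (\prod_(a <- u) p a)%:E.

Definition Rect (A : nat -> {set 'I_N.+1}) (a b : nat) : set (SigmaM N) :=
  [set v | forall l, (a <= l < b)%N -> v l \in A l].

Lemma cyl_meas u : measurable (cyl u : set (SigmaM N)).
Proof. by apply: sub_sigma_algebra; exists u. Qed.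

Lemma rect_step A u M :
  (cyl u : set (SigmaM N)) `&` Rect A (size u) (size u + M.+1) =
  \big[setU/set0]_(j < N.+1 | j \in A (size u))
     (cyl (rcons u j) `&` Rect A (size u).+1 ((size u).+1 + M)).
Proof.
rewrite -bigcup_seq_cond; apply/seteqP; split => v.
  move=> [Hu HR]; exists (v (size u)).
    by rewrite /= mem_index_enum /= HR // leqnn /= -addSnnS leq_addr.
  split.
    move=> l; rewrite size_rcons ltnS leq_eqVlt => /orP[/eqP ->|Hl].
      by rewrite nth_rcons ltnn eqxx.
    by rewrite nth_rcons Hl; apply: Hu.
  move=> l /andP[H1 H2]; apply: HR.
  by rewrite -addSnnS H2 andbT ltnW.
case=> j /= /andP[_ Hj] [Hc HR]; split.
  move=> l Hl; have := Hc l; rewrite size_rcons nth_rcons Hl => -> //.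
  exact: ltnW.
move=> l /andP[H1 H2]; move: H1; rewrite leq_eqVlt => /orP[/eqP El|Hl].
  have := Hc (size u); rewrite size_rcons ltnSn nth_rcons ltnn eqxx => H.
  by rewrite -El H.
by apply: HR; rewrite Hl addSnnS.
Qed.

Lemma rect0 A u : (cyl u : set (SigmaM N)) `&` Rect A (size u) (size u + 0) = cyl u.
Proof.
apply/seteqP; split => v; first by case.
move=> Hv; split => // l; rewrite addn0 => /andP[H1 H2].
by have := leq_trans H2 H1; rewrite ltnn.
Qed.

Lemma rect_meas A M u : measurable ((cyl u : set (SigmaM N)) `&` Rect A (size u) (size u + M)).
Proof.
elim: M u => [|M IH] u; first by rewrite rect0; apply: cyl_meas.
rewrite rect_step; apply: bigsetU_measurable => j _.
by have := IH (rcons u j); rewrite size_rcons.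
Qed.

Lemma rect_mu A M u :
  mu ((cyl u : set (SigmaM N)) `&` Rect A (size u) (size u + M)) =
  ((\prod_(a <- u) p a) *
     \prod_(size u <= l < size u + M) \sum_(j in A l) p j)%:E.
Proof.
elim: M u => [|M IH] u.
  by rewrite rect0 Hmu addn0 big_geq // mulr1.
rewrite rect_step measure_bigsetU_ord_cond.
- have E : forall j, (size u).+1 = size (rcons u j) by move=> j; rewrite size_rcons.
  rewrite (eq_bigr (fun j => ((\prod_(a <- rcons u j) p a) * \prod_((size u).+1 <= l < (size u).+1 + M) \sum_(j0 in A l) p j0)%:E)); last first.
    by move=> j _; have := IH (rcons u j); rewrite size_rcons.
  rewrite sumEFin; congr (_%:E).
  rewrite [in RHS]big_ltn; last by lia.
  rewrite mulrA mulr_sumr mulr_suml; apply: eq_bigr => j _.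
  rewrite big_rcons /= -addSnnS.
  by [].
- move=> j _; have := rect_meas A M (rcons u j); by rewrite size_rcons.
- move=> i j _ _ [v [[Hi _] [Hj _]]].
  have := Hi (size u); have := Hj (size u).
  rewrite !size_rcons ltnSn !nth_rcons ltnn eqxx => -> // ->//.
Qed.
End Rect.
Lemma sort_perm (d : nat) (rl : 'I_d -> 'I_d -> bool) :
  (forall k, ~~ rl k k) ->
  (forall a b c, rl a b -> rl b c -> rl a c) ->
  (forall a b, a != b -> rl a b || rl b a) ->
  exists s : {perm 'I_d}, forall a b : 'I_d, (a < b)%N -> rl (s a) (s b).
Proof.
move=> Hirr Htr Htot.
pose rk k := #|[pred m | rl m k]|.
have rk_lt : forall k, (rk k < d)%N.
  move=> k; apply: (@leq_trans (#|predC1 k|).+1).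
    rewrite ltnS; apply: subset_leq_card; apply/fintype.subsetP => m; rewrite !inE.
    by apply: contraTneq => ->; apply: Hirr.
  by rewrite cardC1 card_ord; case: k => k; case: (d) => // n _ /=.
have rk_mono : forall a b, rl a b -> (rk a < rk b)%N.
  move=> a b Hab; apply: proper_card; apply/properP; split.
    by apply/fintype.subsetP => m; rewrite !inE => H; apply: Htr H Hab.
  by exists a; rewrite !inE // (negbTE (Hirr a)).
pose f k := Ordinal (rk_lt k).
have finj : injective f.
  move=> a b /(congr1 val) /= E; apply/eqP; apply: contraT => Hne.
  by case/orP: (Htot a b Hne) => /rk_mono; rewrite E ltnn.
exists (perm finj)^-1%g => a b Hab.
set x := ((perm finj)^-1)%g a; set y := ((perm finj)^-1)%g b.
have Ex : f x = a by rewrite /x -(permE finj) permKV.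
have Ey : f y = b by rewrite /y -(permE finj) permKV.
have Hxy : x != y.
  apply: contraTneq Hab => Exy; by rewrite -Ex -Ey Exy ltnn.
case/orP: (Htot x y Hxy) => // /rk_mono.
have : (rk x < rk y)%N by move: Hab; rewrite -Ex -Ey.
by move=> H1 H2; have := ltn_trans H1 H2; rewrite ltnn.
Qed.
Section IFS2.
Variables (R : realType) (N d : nat) (lam t : 'I_N.+1 -> 'I_d -> R).

Definition ov (k : 'I_d) (a b : 'I_N.+1) : Prop :=
  forall x, inCube x -> fIFS lam t a x k = fIFS lam t b x k.

Lemma PiI_eq S n a b : PiI lam t S n a = PiI lam t S n b <-> overlap lam t S a b.
Proof.
have ovr : forall c, overlap lam t S c c by [].
have ovs : forall c c', overlap lam t S c c' -> overlap lam t S c' c.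
  by move=> c c' H x Hx k Hk; rewrite H.
have ovt : forall c c' c'', overlap lam t S c c' -> overlap lam t S c' c'' ->
   overlap lam t S c c''.
  by move=> c c' c'' H H' x Hx k Hk; rewrite H // H'.
have Hex : forall c, exists i, (i \in Iset lam t S n) && `[< overlap lam t S i c >].
  move=> c.
  have Pc : `[< overlap lam t S c c >] by apply/asboolP.
  case: (@arg_minnP _ c (fun i => `[< overlap lam t S i c >]) (fun i : 'I_N.+1 => val i) Pc) => m /asboolP Pm Hmin.
  exists m; apply/andP; split; last by apply/asboolP.
  rewrite /Iset; case: ifP => _; last by rewrite inE.
  rewrite inE; apply/negP => /existsP [i /andP [Hi /asboolP Hov]].
  have : (m <= i)%N by apply: Hmin; apply/asboolP; apply: ovt Hov Pm.
  by rewrite leqNgt Hi.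
rewrite /PiI; split.
  case: pickP => [i /andP[_ /asboolP Hia]|Hn]; last first.
    by case: (Hex a) => i Hi; rewrite Hn in Hi.
  case: pickP => [i' /andP[_ /asboolP Hib]|Hn]; last first.
    by case: (Hex b) => i0 Hi; rewrite Hn in Hi.
  move=> /= E; subst i'.
  exact: ovt (ovs _ _ Hia) Hib.
move=> Hab.
rewrite (@eq_pick _ _ (fun i => (i \in Iset lam t S n) && `[< overlap lam t S i b >])); last first.
move=> i /=; congr andb; apply/asboolP/asboolP => H.
  exact: ovt H Hab.
exact: ovt H (ovs _ _ Hab).
case: pickP => [i _ //|Hn].
by case: (Hex b) => i0 Hi; rewrite Hn in Hi.
Qed.

Lemma prodlamS w n k : prodlam lam w n k.+1 = prodlam lam w n k * lam (w k) n.
Proof. by rewrite /prodlam big_ord_recr. Qed.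

Lemma prodlam_ge0 w n k : (forall i n, 0 < lam i n) -> 0 <= prodlam lam w n k.
Proof. move=> H; rewrite /prodlam; apply: prodr_ge0 => i _; exact: ltW. Qed.

Lemma Lsc_step (eps : R) w n r : 0 < r -> 0 < eps ->
  (forall i n, 0 < lam i n) -> (forall i n, lam i n < 1 - eps) ->
  (Lsc lam w r n <= Lsc lam w ((1 - eps) * r) n <= (Lsc lam w r n).+1)%N.
Proof.
move=> r0 e0 Hl He.
have e1 : 0 < 1 - eps by have := He ord0 n; have := Hl ord0 n; lra.
have rle : (1 - eps) * r <= r by nra.
have step : forall k, prodlam lam w n k <= r -> prodlam lam w n k.+1 <= (1 - eps) * r.
  move=> k Hk; rewrite prodlamS.
  have := prodlam_ge0 w n k Hl; have := Hl (w k) n; have := He (w k) n.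
  move=> h1 h2 h3; nra.
rewrite /Lsc.
case: pselect => [h|h]; case: pselect => [h'|h'].
- case: ex_minnP => m Hm Hmin; case: ex_minnP => m' Hm' Hmin'.
  apply/andP; split; first by apply: Hmin; exact: le_trans Hm' rle.
  by apply: Hmin'; apply: step.
- by exfalso; apply: h'; case: h => k Hk; exists k.+1; apply: step.
- by exfalso; apply: h; case: h' => k Hk; exists k; exact: le_trans Hk rle.
- by [].
Qed.

Section Ord.
Variables (w : Sigma N) (r : R).
Local Notation Lk k := (Lsc lam w r k).
Local Notation Q k := (prodlam lam w k (Lk k)).

Lemma prec_iff k m : prec lam w r k m =
  (Lk m < Lk k)%N || ((Lk k == Lk m) && ((Q m < Q k) || ((Q m == Q k) && (k < m)%N))).
Proof.
rewrite /prec /tie.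
case: (ltngtP (Lk m) (Lk k)) => //= E.
rewrite -E.
case: (ltngtP k m) => Hkm /=.
- by rewrite le_eqVlt andbT orbC.
- by rewrite -ltNge andbF orbF.
- move/val_inj: Hkm => Hkm; subst m; by rewrite lexx ltxx andbF.
Qed.

Lemma prec_irr k : ~~ prec lam w r k k.
Proof. by rewrite prec_iff !ltnn ltxx !andbF. Qed.

Lemma prec_trans a b c : prec lam w r a b -> prec lam w r b c -> prec lam w r a c.
Proof.
rewrite !prec_iff.
move=> /orP[Hab|/andP[/eqP Eab Hab]] /orP[Hbc|/andP[/eqP Ebc Hbc]]; apply/orP.
- by left; apply: ltn_trans Hbc Hab.
- by left; rewrite -Ebc; exact: Hab.
- by left; rewrite Eab.
have HE : Lk a == Lk c by rewrite Eab Ebc.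
right; rewrite HE /=.
move: Hab Hbc => /orP[Hab|/andP[/eqP Eab' Hab]] /orP[Hbc|/andP[/eqP Ebc' Hbc]]; apply/orP.
- by left; apply: lt_trans Hbc Hab.
- by left; rewrite Ebc'.
- by left; rewrite -Eab'.
- by right; rewrite Ebc' Eab' eqxx (ltn_trans Hab Hbc).
Qed.

Lemma prec_tot a b : a != b -> prec lam w r a b || prec lam w r b a.
Proof.
move=> Hab; rewrite !prec_iff.
case: (ltngtP (Lk b) (Lk a)) => //= E.
case: (ltgtP (Q b) (Q a)) => //= EQ.

case: (ltngtP a b) => // /val_inj E'; by rewrite E' eqxx in Hab.
Qed.

Lemma sigma_ordP : is_ordering lam w r (sigma_ord lam w r).
Proof.
rewrite /sigma_ord; case: pickP => [s Hs //|Hn].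
have [s Hs] := @sort_perm d _ prec_irr prec_trans prec_tot.
have : is_ordering lam w r s.
  apply/forallP => a; apply/forallP => b; apply/implyP; exact: Hs.
by rewrite Hn.
Qed.

Lemma sigma_sorted (a b : 'I_d) : (a <= b)%N ->
  (Lsc lam w r (sigma_ord lam w r b) <= Lsc lam w r (sigma_ord lam w r a))%N.
Proof.
rewrite leq_eqVlt => /orP[/eqP /val_inj -> //|Hab].
have := sigma_ordP => /forallP /(_ a) /forallP /(_ b) /implyP /(_ Hab).
rewrite prec_iff => /orP[/ltnW //|/andP[/eqP -> _] //].
Qed.
End Ord.

Definition Aset (w : Sigma N) (r : R) (l : nat) : {set 'I_N.+1} :=
  [set j | [forall k : 'I_d, (l < Lsc lam w r k)%N ==> `[< ov k j (w l) >]]].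

Lemma Bsym_eq w r : Bsym lam t w r = [set v | forall l, v l \in Aset w r l].
Proof.
apply/seteqP; split => v Hv l.
  rewrite inE; apply/forallP => k; apply/implyP => Hl; apply/asboolP.
  set s := sigma_ord lam w r.
  set n := (s^-1)%g k.
  have Hk : s n = k by rewrite /n permKV.
  have := Hv n l; rewrite /= -/s Hk => /(_ Hl) /PiI_eq Hov x Hx.
  apply: Hov => //; rewrite -Hk; apply/imsetP; exists n => //; by rewrite inE.
move=> /= l0 Hl0; apply/PiI_eq => x Hx k' /imsetP [m]; rewrite inE => Hm ->.
have := Hv l0; rewrite inE => /forallP /(_ (sigma_ord lam w r m)) /implyP.
move=> H.
have Hlt : (l0 < Lsc lam w r (sigma_ord lam w r m))%N.
  apply: leq_trans Hl0 _; apply: sigma_sorted; by [].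
by move/asboolP: (H Hlt); apply.
Qed.
End IFS2.
Lemma prod_bound (R : realType) (M D : nat) (a b : 'I_M -> R) (E : {set 'I_M}) (c : R) :
  0 < c -> c <= 1 -> (forall l, 0 <= a l <= 1) -> (forall l, c <= b l) ->
  (forall l, l \notin E -> a l = b l) -> (#|E| <= D)%N ->
  \prod_(l < M) a l <= (c ^+ D)^-1 * \prod_(l < M) b l.
Proof.
move=> c0 c1 Ha Hb Hab HE.
rewrite (bigID (mem E)) [X in _ <= _ * X](bigID (mem E)) /=.
have eqX : \prod_(i < M | ~~ (i \in E)) a i = \prod_(i < M | ~~ (i \in E)) b i.
  by apply: eq_bigr => i /Hab.
rewrite eqX.
have X0 : 0 <= \prod_(i < M | ~~ (i \in E)) b i.
  by apply: prodr_ge0 => i _; apply: le_trans (Hb i); exact: ltW.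
have PA : \prod_(i < M | i \in E) a i <= 1 by apply: prodr_ile1 => i _; exact: Ha.
have PA0 : 0 <= \prod_(i < M | i \in E) a i by apply: prodr_ge0 => i _; case/andP: (Ha i).
have PB : c ^+ D <= \prod_(i < M | i \in E) b i.
  apply: (@le_trans _ _ (c ^+ #|E|)); first by apply: ler_wiXn2l => //; exact: ltW.
  rewrite -prodr_const; apply: ler_prod => i _; rewrite (ltW c0) /=; exact: Hb.
have cD : 0 < c ^+ D by apply: exprn_gt0.
set y := c ^+ D in PB cD *.
have yz : y * y^-1 = 1 by apply: mulfV; rewrite gt_eqF.
have z0 : 0 < y^-1 by rewrite invr_gt0.
set z := y^-1 in yz z0 *.
set pa := \prod_(i < M | i \in E) a i in PA PA0 *.
set pb := \prod_(i < M | i \in E) b i in PB *.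
set X := \prod_(i < M | ~~ (i \in E)) b i in X0 *.
have h : 1 <= z * pb by nra.
nra.
Qed.

Lemma card_img (M d : nat) (L : 'I_d -> nat) :
  (#|[set l : 'I_M | [exists k, L k == l]]| <= d)%N.
Proof.
case: M => [|M]; first by rewrite (leq_trans (max_card _)) // card_ord.
apply: (@leq_trans #|[set (inord (L k) : 'I_M.+1) | k : 'I_d]|).
  apply: subset_leq_card; apply/fintype.subsetP => l; rewrite inE => /existsP [k /eqP Hk].
  by apply/imsetP; exists k => //; rewrite Hk inord_val.
by apply: leq_trans (leq_imset_card _ _) _; rewrite card_ord.
Qed.

Theorem lemma5p5 (R : realType) (N d : nat) (lam t : 'I_N.+1 -> 'I_d -> R)
  (Hlam : forall i n, 0 < lam i n < 1)
  (Hinv : forall i x, inCube x -> inCube (fIFS lam t i x))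
  (Hdist : forall i j, i != j ->
     exists x, inCube x /\ fIFS lam t i x <> fIFS lam t j x)
  (Hcoord : forall m n : 'I_d, m != n -> exists i, lam i n != lam i m)
  (p : 'I_N.+1 -> R) (Hp : forall i, 0 < p i) (Hp1 : \sum_i p i = 1)
  (mu : {measure set (SigmaM N) -> \bar R})
  (Hmu : forall u : seq 'I_N.+1, mu (cyl u) = (\prod_(a <- u) p a)%:E)
  (eps : R) (Heps : 0 < eps) (Heps1 : forall i n, lam i n < 1 - eps) :
  exists C1 : R, forall (w : Sigma N) (r : R), 0 < r <= 1 ->
    (mu (Bsym lam t w r) <= C1%:E * mu (Bsym lam t w ((1 - eps) * r)))%E.
Proof.
pose pm := \prod_i p i.
have p1 : forall i, p i <= 1.
  move=> i; rewrite -Hp1 (bigD1 i) //= lerDl; apply: sumr_ge0 => j _; exact: ltW.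
have pm0 : 0 < pm by apply: prodr_gt0.
have pm1 : pm <= 1 by apply: prodr_ile1 => i _; rewrite ltW ?p1.
have pmle : forall i, pm <= p i.
  move=> i; rewrite /pm (bigD1 i) //=.
  rewrite -[X in _ <= X]mulr1; apply: ler_wpM2l; first exact: ltW.
  by apply: prodr_ile1 => j _; rewrite ltW ?p1.
exists ((pm ^+ d)^-1) => w r /andP[r0 r1].
set r' := (1 - eps) * r.
have Hl : forall i n, 0 < lam i n by move=> i n; case/andP: (Hlam i n).
have Lst := fun k => @Lsc_step R N d lam eps w k r r0 Heps Hl Heps1.
pose M := (\max_(k : 'I_d) (Lsc lam w r k + Lsc lam w r' k))%N.
have LM1 : forall k, (Lsc lam w r k <= M)%N.
  by move=> k; apply: leq_trans (leq_addr _ _) (leq_bigmax k).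
have LM2 : forall k, (Lsc lam w r' k <= M)%N.
  by move=> k; apply: leq_trans (leq_addl _ _) (leq_bigmax k).
have HB : forall rr, (forall k, (Lsc lam w rr k <= M)%N) ->
    mu (Bsym lam t w rr) = (\prod_(l < M) \sum_(j in Aset R N d lam t w rr l) p j)%:E.
  move=> rr Hrr; rewrite Bsym_eq.
  have -> : [set v : Sigma N | forall l, v l \in Aset R N d lam t w rr l] =
      (cyl [::] : set (SigmaM N)) `&` Rect N (Aset R N d lam t w rr) (size (@nil 'I_N.+1)) (size (@nil 'I_N.+1) + M).
    apply/seteqP; split => v.
      by move=> Hv; split; [move=> l; rewrite /= ltn0 | move=> l _; apply: Hv].
    move=> [_ Hv] l; case: (ltnP l M) => HlM; first by apply: Hv; rewrite /= add0n HlM.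
    rewrite inE; apply/forallP => k; apply/implyP => Hk; exfalso.
    have := Hrr k; lia.
  by rewrite (@rect_mu R N p mu Hmu) big_nil mul1r /= add0n big_mkord.
rewrite HB // HB // -EFinM lee_fin.
apply: (@prod_bound R M d _ _ [set l : 'I_M | [exists k, Lsc lam w r k == l]]) => //.
- move=> l; apply/andP; split; first by apply: sumr_ge0 => j _; exact: ltW.
  rewrite -Hp1 [X in _ <= X](bigID (mem (Aset R N d lam t w r l))) /= lerDl.
  by apply: sumr_ge0 => j _; exact: ltW.
- move=> l; apply: le_trans (pmle (w l)) _.
  rewrite (bigD1 (w l)) /=.
    by rewrite lerDl; apply: sumr_ge0 => j _; exact: ltW.
  by rewrite inE; apply/forallP => k; apply/implyP => _; apply/asboolP.
- move=> l; rewrite inE => /existsPn Hn.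
  suff -> : Aset R N d lam t w r l = Aset R N d lam t w r' l by [].
  apply/setP => j; rewrite !inE; apply: eq_forallb => k.
  have := Lst k; have := Hn k; move=> h1 /andP[h2 h3].
  rewrite /r'; congr (_ ==> _); apply/idP/idP => H; lia.
- have H := @card_img M d (fun k => Lsc lam w r k).
  apply: leq_trans H; apply: subset_leq_card; apply/fintype.subsetP => l; rewrite !inE; done.
Qed.
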